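(* Let $S\ge0$ be an integer and let $\mathbf a=(a_1,\dots,a_m)$ be a partition. Then there exists a partition $\mathbf g=(g_1,\dots,g_{m+1})$ such that $\sum_{i=1}^{m+1}g_i=S$ and $\mathbf g\prec'\mathbf a$.
   Context: A partition is a nonincreasing finite sequence of nonnegative integers. 1-step generalized majorization: for nonincreasing integer sequences $\mathbf g=(g_1,\dots,g_{m+1})$ and $\mathbf a=(a_1,\dots,a_m)$, set $a_{m+1}=-\infty$ and $h=\min\{i: a_i<g_i\}$; then $\mathbf g\prec'\mathbf a$ means $a_i=g_{i+1}$ for all $h\le i\le m$. *)

(* Defs.v *)
From mathcomp Require Import all_boot.
Set Implicit Arguments. Unset Strict Implicit. Unset Printing Implicit Defensive.

Definition is_partition (s : seq nat) : Prop := sorted geq s.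

(* Indices are 0-based: a = (a_0,...,a_{m-1}), g = (g_0,...,g_m).
   The extended a_m = -oo, so "a_i < g_i" holds automatically for i >= m.
   first_exceed g a = min { i <= m : a_i < g_i } (0-based h). *)
Definition first_exceed (g a : seq nat) : nat :=
  find (fun i => (size a <= i) || (nth 0 a i < nth 0 g i)) (iota 0 (size a).+1).

(* 1-step generalized majorization  g <' a  (g of length m+1, a of length m):
   a_i = g_{i+1} for all h <= i <= m  (1-based), i.e. for h <= i < m (0-based). *)
Definition gen_maj1 (g a : seq nat) : Prop :=
  size g = (size a).+1 /\
  forall i, first_exceed g a <= i < size a -> nth 0 a i = nth 0 g i.+1.

(* Main.v *)
Require Import Defs.
From mathcomp Require Import all_boot.
From mathcomp Require Import zify.

Definition Pg (g a : seq nat) : Prop :=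
  size g = (size a).+1 /\ sorted geq g /\
  exists k, k <= size a /\ (forall i, i < k -> nth 0 g i <= nth 0 a i) /\
    (forall i, k <= i < size a -> nth 0 g i.+1 = nth 0 a i).

Lemma find_ge (T : Type) (p : pred T) (s : seq T) k x0 :
  k <= size s -> (forall i, i < k -> ~~ p (nth x0 s i)) -> k <= find p s.
Proof.
move=> Hk H; rewrite leqNgt; apply/negP => Hf.
have Hs : find p s < size s by exact: leq_trans Hf Hk.
have Hh : has p s by rewrite has_find.
have := nth_find x0 Hh.
by rewrite (negbTE (H _ Hf)).
Qed.

Lemma Pg_maj g a : Pg g a -> gen_maj1 g a.
Proof.
move=> [Hs [_ [k [Hk [H1 H2]]]]]; split => // i /andP [Hh Hi].
have Hkh : k <= first_exceed g a.
  rewrite /first_exceed; apply: (@find_ge _ _ _ _ 0); first by rewrite size_iota; lia.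
  move=> j Hj; have Hjm : j < (size a).+1 by lia.
  rewrite (nth_iota _ _ Hjm) add0n.
  apply/negP => /orP [] Hc; first by lia.
  have := H1 _ Hj; lia.
symmetry; apply: H2; apply/andP; split; [exact: leq_trans Hkh Hh | exact: Hi].
Qed.

Lemma head_le_sumn (g : seq nat) : head 0 g <= sumn g.
Proof. case: g => //= x g; exact: leq_addr. Qed.

Lemma build (a : seq nat) : sorted geq a -> forall s, exists g,
  Pg g a /\ sumn g = s /\ head 0 g <= maxn (head 0 a) (s - sumn a).
Proof.
elim: a => [|y a IH] Ha s.
  exists [:: s]; split; last by rewrite /= addn0 subn0 max0n.
  split => //; split => //; exists 0; split => //; split => // i; lia.
have Ha' : sorted geq a by move: Ha => /= /path_sorted.
case: (leqP (y + sumn (y :: a)) s) => Hs; rewrite /= in Hs.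
  exists ((s - sumn (y :: a)) :: y :: a); split; last first.
    split; first by rewrite /=; lia.
    by rewrite /=; lia.
  split => //; split.
    by rewrite [sorted _ _]/= ; apply/andP; split; [rewrite /=; lia | exact: Ha].
  exists 0; split => //; split => // i; lia.
set z := minn y s.
have [g' [[Hsz [Hso [k [Hk [H1 H2]]]]] [Hsum Hhd]]] := IH Ha' (s - z).
have Hg'z : head 0 g' <= z.
  case: (leqP y s) => Hys.
  - have -> : z = y by rewrite /z; lia.
    apply: (leq_trans Hhd); rewrite geq_max; apply/andP; split.
      by move: Ha; case: (a) => //= w a0 /andP [].
    move: Hs; rewrite /=; lia.
  - have Hz : z = s by rewrite /z; lia.
    have := head_le_sumn g'; rewrite Hsum Hz; lia.
exists (z :: g'); split; last first.
  split; first by rewrite /= Hsum /z; lia.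
  by rewrite /= /z; lia.
split; first by rewrite /= Hsz.
split.
  move: Hso Hg'z Hsz; case: (g') => //= w g'' -> Hw _; rewrite andbT; exact: Hw.
exists k.+1; split => //; split.
  case => [|i] Hi /=; first by rewrite /z geq_minl.
  exact: H1.
case => [|i] //= /andP [Hi1 Hi2]; apply: H2; by apply/andP.
Qed.

Theorem lemma5p1 (s : nat) (a : seq nat) :
  is_partition a ->
  exists g : seq nat,
    is_partition g /\ size g = (size a).+1 /\ sumn g = s /\ gen_maj1 g a.
Proof.
move=> Ha; have [g [HP [Hs _]]] := @build a Ha s.
exists g; split; first by case: HP => _ [].
split; first by case: HP.
split => //; exact: Pg_maj.
Qed.
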